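(* Let $\hat H(w)=\frac1{1+w}$. Let $(\alpha,\beta)\in\mathbb{R}^2$ satisfy $\alpha<2$, $\beta>\alpha-1$, and one of: (a) $-8<\alpha<2$ and $-16-4\alpha<\beta<\alpha^2/4$; (b) $\alpha^2/4\le\beta\le 1$; (c) $1<\beta<16$, $\beta\ge\alpha^2/4$, and $\alpha<2\big(8-8\beta^{1/4}+\sqrt\beta\big)$. Then for every $\tilde\tau>0$, $\Phi(w)=0$ has no root on the imaginary axis and all its roots satisfy $\operatorname{Re} w<0$; i.e. the equilibrium is locally asymptotically stable for every mean delay. (This is the region bounded by the line $\beta=-4\alpha-16$, the curve $\alpha=2(8-8\beta^{1/4}+\sqrt\beta)$ and the line $\beta=\alpha-1$, and it contains the kernel-independent region $\{|\alpha|-1<\beta<1\}$.)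
   Context: For a delay-to-time-constant ratio $\tilde\tau>0$ and $\alpha,\beta\in\mathbb{R}$, the rescaled characteristic equation of the linearized coupled Wilson–Cowan system with kernel transform $\hat H$ is $$\Phi(w):=(w+\tilde\tau)^4-\alpha\,\tilde\tau^2(w+\tilde\tau)^2\hat H(w)^2+\beta\,\tilde\tau^4\hat H(w)^4=0.$$ For the weak Gamma kernel $h(t)=\tau^{-1}e^{-t/\tau}$ (mean $\tau$), $\hat H(w)=(1+w)^{-1}$. The equilibrium is locally asymptotically stable iff all roots of $\Phi$ have negative real part. *)

(* Defs.v *)
From Stdlib Require Import Reals.
From Coquelicot Require Import Coquelicot.
Open Scope R_scope.

Definition Hhat (w : C) : C := Cinv (RtoC 1 + w)%C.

Definition Phi (t alpha beta : R) (w : C) : C :=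
  ((w + RtoC t) ^ 4
   - RtoC alpha * RtoC t ^ 2 * (w + RtoC t) ^ 2 * Hhat w ^ 2
   + RtoC beta * RtoC t ^ 4 * Hhat w ^ 4)%C.

(* A root of Phi: a point of the domain of Phi (w <> -1, where H has its pole)
   at which Phi vanishes. *)
Definition is_root_Phi (t alpha beta : R) (w : C) : Prop :=
  w <> (- RtoC 1)%C /\ Phi t alpha beta w = RtoC 0.

Definition region (alpha beta : R) : Prop :=
  alpha < 2 /\ beta > alpha - 1 /\
  ( (-8 < alpha < 2 /\ -16 - 4 * alpha < beta < alpha ^ 2 / 4)
  \/ (alpha ^ 2 / 4 <= beta <= 1)
  \/ (1 < beta < 16 /\ beta >= alpha ^ 2 / 4 /\
      alpha < 2 * (8 - 8 * sqrt (sqrt beta) + sqrt beta)) ).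

(* Main.v *)
Require Import Defs.
From Stdlib Require Import Reals Lra Psatz.
From Coquelicot Require Import Coquelicot.
Open Scope R_scope.

Lemma region_aux (alpha beta : R) : region alpha beta ->
  alpha < 2 /\ beta > alpha - 1 /\ -8 < alpha /\ 0 < 16 + 4 * alpha + beta.
Proof.
  intros [H1 [H2 H3]]. repeat split; try lra;
  destruct H3 as [[Ha Hb]|[[Ha Hb]|[Ha [Hb Hc]]]]; try lra; nra.
Qed.

Lemma key (alpha beta a b : R) : region alpha beta ->
  (a*a-b*b)^2 - (2*a*b)^2 - alpha*(a*a-b*b) + beta = 0 ->
  (2*a*b) * (2*(a*a-b*b) - alpha) = 0 ->
  b*b < 4*(1-a).
Proof.
  intros Hr E1 E2.
  destruct (region_aux _ _ Hr) as [Ha [Hb [Hc Hd]]].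
  destruct (Req_dec (2*a*b) 0) as [Hq|Hq].
  - assert (a = 0 \/ b = 0) as [H0|H0].
    { destruct (Req_dec a 0); [left; auto| right; nra]. }
    + subst a. destruct (Rlt_or_le (b*b) 4) as [h|h]; [lra|].
      exfalso. assert (0 <= (b*b-4)*(b*b+4+alpha)) by (apply Rmult_le_pos; lra).
      assert ((0*0-b*b)^2 - (2*0*b)^2 - alpha*(0*0-b*b) + beta
        = (b*b-4)*(b*b+4+alpha) + (16+4*alpha+beta)) by ring. lra.
    + subst b. destruct (Rlt_or_le a 1) as [h|h]; [lra|].
      exfalso. assert (0 <= (a*a-1)*(a*a+1-alpha)) by (apply Rmult_le_pos; nra).
      assert ((a*a-0*0)^2 - (2*a*0)^2 - alpha*(a*a-0*0) + beta
        = (a*a-1)*(a*a+1-alpha) + (1-alpha+beta)) by ring. lra.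
  - assert (Hp : 2*(a*a-b*b) = alpha).
    { apply Rmult_eq_reg_l with (2*a*b); [lra|auto]. }
    assert (Hbeta : beta = (a*a+b*b)^2) by nra.
    assert (Hq2 : 0 < (2*a*b)^2) by (apply pow2_gt_0; auto).
    destruct Hr as [_ [_ [[H1 H2]|[[H1 H2]|[H1 [H2 H3]]]]]].
    + exfalso. nra.
    + assert (a*a+b*b <= 1) by nra.
      assert (a <> 1). { intro; subst a. assert (b = 0) by nra. apply Hq; subst; ring. }
      assert (a < 1) by nra. nra.
    + assert (Hs : sqrt beta = a*a+b*b).
      { rewrite Hbeta. apply sqrt_pow2. nra. }
      rewrite Hs in H3.
      set (rho := sqrt (a*a+b*b)) in *.
      assert (Hr0 : 0 <= rho) by apply sqrt_pos.
      assert (Hr2 : rho*rho = a*a+b*b) by (apply sqrt_sqrt; nra).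
      assert (rho < 2) by nra.
      destruct (Rlt_or_le (b*b) (4*(1-a))) as [h|h]; [lra|].
      exfalso.
      assert ((a-2)*(a-2) <= rho*rho) by nra.
      assert (2 - rho <= a) by nra.
      assert ((2-rho)*(2-rho) <= a*a) by nra.
      nra.
Qed.

Theorem mainTheorem10 (alpha beta : R) :
  region alpha beta ->
  forall t : R, 0 < t ->
    (forall y : R, ~ is_root_Phi t alpha beta (RtoC 0 + RtoC y * Ci)%C) /\
    (forall w : C, is_root_Phi t alpha beta w -> Re w < 0).
Proof.
  intros Hr t Ht.
  assert (Main : forall w : C, is_root_Phi t alpha beta w -> Re w < 0).
  { intros w [Hw HP].
    set (v := (RtoC 1 + w)%C).
    assert (Hv : v <> RtoC 0).
    { intro E. apply Hw. unfold v in E.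
      replace w with ((RtoC 1 + w) - RtoC 1)%C by ring. rewrite E. ring. }
    set (u := ((w + RtoC t) * v)%C).
    assert (Eu : (u^4 - RtoC alpha * RtoC t ^ 2 * u^2 + RtoC beta * RtoC t ^ 4)%C = RtoC 0).
    { replace (u^4 - RtoC alpha * RtoC t ^ 2 * u^2 + RtoC beta * RtoC t ^ 4)%C
        with (Phi t alpha beta w * v^4)%C.
      - rewrite HP. ring.
      - unfold Phi, Hhat, u. fold v. field. auto. }
    destruct w as [x y]. unfold u, v in Eu.
    pose proof (f_equal fst Eu) as E1. pose proof (f_equal snd Eu) as E2.
    simpl in E1, E2.
    set (A := (x+t)*(1+x) - y*y). set (B := y*(2*x+1+t)).
    assert (F1 : (A*A-B*B)^2 - (2*A*B)^2 - alpha*t^2*(A*A-B*B) + beta*t^4 = 0).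
    { rewrite <- E1. unfold A, B. ring. }
    assert (F2 : (2*A*B) * (2*(A*A-B*B) - alpha*t^2) = 0).
    { rewrite <- E2. unfold A, B. ring. }
    assert (Ht4 : 0 < t^4) by (apply pow_lt; auto).
    assert (K : (B/t)*(B/t) < 4*(1-A/t)).
    { apply (key alpha beta); auto.
      - apply Rmult_eq_reg_l with (t^4); [|lra].
        rewrite Rmult_0_r. rewrite <- F1. field. lra.
      - apply Rmult_eq_reg_l with (t^4); [|lra].
        rewrite Rmult_0_r. rewrite <- F2. field. lra. }
    assert (K2 : B*B < 4*t*(t-A)).
    { replace (B*B) with (t*t*((B/t)*(B/t))) by (field; lra).
      replace (4*t*(t-A)) with (t*t*(4*(1-A/t))) by (field; lra).
      apply Rmult_lt_compat_l; nra. }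
    simpl. destruct (Rlt_or_le x 0) as [h|h]; [auto|exfalso].
    unfold A, B in K2. clear -K2 h Ht.
    assert (4*t <= (2*x+1+t)*(2*x+1+t)).
    { assert (0 <= (t-1)*(t-1)) by apply Rle_0_sqr. assert (0 <= x*(1+t)) by nra.
      assert (0 <= x*x) by nra.
      assert ((2*x+1+t)*(2*x+1+t) - 4*t = 4*(x*x) + 4*(x*(1+t)) + (t-1)*(t-1)) by ring.
      lra. }
    assert (4*t*(y*y) <= (y*y)*((2*x+1+t)*(2*x+1+t))).
    { assert (0 <= y*y) by nra. nra. }
    assert (0 <= x*x + (1+t)*x) by nra.
    nra. }
  split; [|exact Main].
  intros y Hroot. apply Main in Hroot. simpl in Hroot. lra.
Qed.
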